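(* Let $L$ be a finite inf-semilattice with least element $\bot$ and let $\widetilde L:=\{(x,y)\in L^2: x\wedge y=\bot\}$ with the product order. Then for all $(z,t),(x,y)\in\widetilde L$ with $(z,t)\le(x,y)$, $$\mu_{\widetilde L}((z,t),(x,y))=\mu_L(z,x)\,\mu_L(t,y).$$ Consequently, if $f,g:\widetilde L\to\mathbb R$ satisfy $f(x,y)=\sum_{(x',y')\in\widetilde L,\,(x',y')\le(x,y)}g(x',y')$ for all $(x,y)\in\widetilde L$, then $g(x,y)=\sum_{(z,t)\in\widetilde L,\,(z,t)\le(x,y)}\mu_L(z,x)\mu_L(t,y)f(z,t)$ for all $(x,y)\in\widetilde L$.
   Context: For a finite poset $P$, the Möbius function $\mu_P$ is defined on pairs $a\le b$ by $\mu_P(a,a)=1$ and $\sum_{a\le c\le b}\mu_P(a,c)=0$ for $a<b$; it is characterized by: for real functions $f,g$ on $P$ (with $P$ having a least element), $g(x)=\sum_{y\le x}f(y)$ for all $x$ iff $f(x)=\sum_{y\le x}\mu_P(y,x)g(y)$ for all $x$. *)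

(* Defs.v *)
From HB Require Import structures.
From mathcomp Require Import all_boot all_order all_algebra.
Set Implicit Arguments. Unset Strict Implicit. Unset Printing Implicit Defensive.
Import Order.TTheory GRing.Theory Num.Theory.

(* The recursion is run with fuel
   #|T|, which suffices since every chain in T has fewer than #|T| steps. *)
Fixpoint mobius_fuel (T : finType) (le : rel T) (n : nat) (a b : T) : int :=
  if a == b then 1%R else
  match n with
  | 0 => 0%R
  | n'.+1 =>
      if le a b then
        (- \sum_(c : T | le a c && le c b && (c != b)) mobius_fuel le n' a c)%R
      else 0%R
  end.

Definition mobius (T : finType) (le : rel T) (a b : T) : int :=
  mobius_fuel le #|T| a b.

Definition leL d (L : porderType d) : rel L := fun x y => (x <= y)%O.

Definition Ltilde d (L : finBMeetSemilatticeType d) :=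
  {p : L * L | (p.1 `&` p.2 == \bot)%O}.

Definition leLt d (L : finBMeetSemilatticeType d) : rel (Ltilde L) :=
  fun p q => ((val p).1 <= (val q).1)%O && ((val p).2 <= (val q).2)%O.

(* Main.v *)
Require Import Defs.
From HB Require Import structures.
From mathcomp Require Import all_boot all_order all_algebra.
Import Order.TTheory GRing.Theory Num.Theory.
Local Open Scope ring_scope.

Set Implicit Arguments. Unset Strict Implicit.
Section Gen.
Variables (T : finType) (le : rel T).
Hypothesis le_refl : forall a, le a a.
Hypothesis le_anti : forall a b, le a b -> le b a -> a = b.
Hypothesis le_trans : forall a b c, le a b -> le b c -> le a c.

Definition itv a b := [pred c | le a c && le c b].

Lemma itv_lt a b c : le a c -> le c b -> c != b -> (#|itv a c| < #|itv a b|)%N.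
Proof.
move=> hac hcb hnb; apply: proper_card; apply/properP; split.
  apply/subsetP => x; rewrite !inE => /andP[h1 h2]; rewrite h1 /=.
  exact: le_trans h2 hcb.
exists b; first by rewrite inE le_refl (le_trans hac hcb).
rewrite inE negb_and; apply/orP; right; apply/negP => hbc.
by move/eqP: hnb; apply; apply: le_anti.
Qed.

Lemma fuel_nle n a b : a != b -> ~~ le a b -> mobius_fuel le n a b = 0.
Proof. by case: n => [|n] /= /negbTE -> // /negbTE ->. Qed.

Lemma fuel_stable n : forall a b, (#|itv a b| <= n.+1)%N ->
  forall m, (n <= m)%N -> mobius_fuel le m a b = mobius_fuel le n a b.
Proof.
elim: n => [|n IH] a b hS m hm.
  case: (eqVneq a b) => [->|hab]; first by case: m {hm} => /= [|m]; rewrite eqxx.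
  case hle: (le a b); last by rewrite !fuel_nle ?hle.
  have : (#|itv a b| >= 2)%N.
    by rewrite (cardD1 a) (cardD1 b) !inE eq_sym hab !le_refl hle.
  by rewrite leqNgt ltnS hS.
case: m hm => [//|m] hm /=.
case: (eqVneq a b) => // hab; case hle: (le a b) => //.
congr (- _); apply: eq_bigr => c /andP[/andP[hac hcb] hcn].
apply: IH => //.
by rewrite -ltnS; apply: leq_trans hS; apply: itv_lt.
Qed.

Lemma mob_eq a b : mobius le a b =
  if a == b then 1 else if le a b then
    - \sum_(c : T | le a c && le c b && (c != b)) mobius le a c else 0.
Proof.
rewrite /mobius.
case: (eqVneq a b) => [->|hab]; first by case: #|T| => /= *; rewrite eqxx.
case hle: (le a b); last by rewrite fuel_nle ?hle.
have : (0 < #|T|)%N by apply/card_gt0P; exists a.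
case E: #|T| => [//|n] _ /=. rewrite (negbTE hab) hle; congr (- _).
apply: eq_bigr => c /andP[/andP[hac hcb] hcn].
transitivity (mobius_fuel le n.+1 a c); last by [].
symmetry; apply: fuel_stable => //.
apply: ltnW; rewrite -E; apply: leq_trans (itv_lt hac hcb hcn) _; exact: max_card.
Qed.

Lemma mob_nle a b : ~~ le a b -> mobius le a b = 0.
Proof.
move=> h; rewrite mob_eq (negbTE h); case: eqP => // e.
by rewrite e le_refl in h.
Qed.

Lemma mob_sum a b : \sum_(c | le c b) mobius le a c = (a == b)%:R.
Proof.
case hab: (le a b); last first.
  rewrite big1; last first.
    move=> c hcb; apply: mob_nle; apply/negP => hac.
    by rewrite (le_trans hac hcb) in hab.
  by case: eqP => // e; rewrite e le_refl in hab.
rewrite (bigD1 b) ?le_refl //= mob_eq.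
case: eqP => [->|/eqP hne].
  rewrite big1 ?addr0 // => c /andP[hcb hcn].
  apply: mob_nle; apply/negP => hbc; move/eqP: hcn; apply; exact: le_anti.
rewrite hab.
have -> : \sum_(i | le i b && (i != b)) mobius le a i =
          \sum_(i | le a i && le i b && (i != b)) mobius le a i.
  rewrite [LHS]big_mkcond [RHS]big_mkcond; apply: eq_bigr => i _.
  case hai: (le a i) => //=; case: ifP => // _; exact: mob_nle (negbT hai).
by rewrite addNr.
Qed.

Lemma mob_unique (m : T -> T -> int) :
  (forall a b, le a b -> \sum_(c | le a c && le c b) m a c = (a == b)%:R) ->
  forall a b, le a b -> m a b = mobius le a b.
Proof.
move=> hm a b.
move: {2}#|itv a b| (leqnn #|itv a b|) => n; elim: n b => [|n IH] b hS hab.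
  have : (0 < #|itv a b|)%N by apply/card_gt0P; exists a; rewrite inE le_refl hab.
  by rewrite lt0n -leqn0 hS.
have := hm a b hab; rewrite (bigD1 b) /=; last by rewrite hab le_refl.
have := mob_sum a b; rewrite (bigD1 b) ?le_refl //= (bigID (le a)) /=.
rewrite [X in _ + (_ + X)]big1; last by move=> c /andP[_ h]; exact: mob_nle.
rewrite addr0 => e1 e2.
have hs : \sum_(i | le a i && le i b && (i != b)) m a i =
          \sum_(i | le i b && (i != b) && le a i) mobius le a i.
  rewrite [RHS](eq_bigl (fun i => le a i && le i b && (i != b))); last first.
    by move=> i; rewrite andbC andbA.
  apply: eq_bigr => c /andP[/andP[hac hcb] hcn]; apply: IH => //.
  by rewrite -ltnS; apply: leq_trans hS; apply: itv_lt.
rewrite hs -e1 in e2; exact: addIr e2.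
Qed.

Lemma sum_T_ord (F : T -> int) : \sum_(x : T) F x = \sum_(i < #|T|) F (enum_val i).
Proof. by rewrite -big_enum_val; apply: eq_bigl => x; rewrite inE. Qed.

Lemma mob_sum_right r p : \sum_(q | le r q) mobius le q p = (r == p)%:R.
Proof.
pose A : 'M[int]_#|T| := \matrix_(i, j) mobius le (enum_val i) (enum_val j).
pose Z : 'M[int]_#|T| := \matrix_(i, j) (le (enum_val i) (enum_val j))%:R.
have AZ : A *m Z = 1%:M.
  apply/matrixP => i j; rewrite !mxE.
  rewrite -(inj_eq enum_val_inj) -mob_sum [RHS]big_mkcond [RHS]sum_T_ord.
  apply: eq_bigr => k _; rewrite !mxE.
  by case: (le _ _); rewrite ?mulr1 ?mulr0.
have /matrixP /(_ (enum_rank r) (enum_rank p)) := mulmx1C AZ.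
rewrite !mxE (inj_eq enum_rank_inj) => <-.
rewrite [LHS]big_mkcond [LHS]sum_T_ord; apply: eq_bigr => k _; rewrite !mxE !enum_rankK.
by case: (le _ _); rewrite ?mul1r ?mul0r.
Qed.

Lemma mob_sum_right' r p :
  \sum_(q | le q p && le r q) mobius le q p = (r == p)%:R.
Proof.
rewrite -mob_sum_right [RHS]big_mkcond [LHS]big_mkcond; apply: eq_bigr => q _.
case: (le r q); rewrite ?andbT ?andbF //.
by case hq: (le q p) => //; rewrite mob_nle ?hq.
Qed.

Lemma mob_inv (R : realFieldType) (f g : T -> R) :
  (forall p, f p = \sum_(q | le q p) g q) ->
  forall p, g p = \sum_(q | le q p) (mobius le q p)%:~R * f q.
Proof.
move=> hf p.
under eq_bigr do rewrite hf big_distrr.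
rewrite (exchange_big_dep (fun r => le r p)) /=; last by move=> q r h1 h2; exact: le_trans h2 h1.
under eq_bigr do rewrite -big_distrl /= -rmorph_sum mob_sum_right'.
rewrite (bigD1 p) ?le_refl //= eqxx mul1r big1 ?addr0 // => r /andP[_ /negbTE ->].
by rewrite mul0r.
Qed.
End Gen.

Section Main.
Variables (d : Order.disp_t) (L : finBMeetSemilatticeType d).

Lemma leL_refl : forall a : L, leL a a. Proof. by move=> a; exact: Order.POrderTheory.le_refl. Qed.
Lemma leL_anti : forall a b : L, leL a b -> leL b a -> a = b.
Proof. by move=> a b h1 h2; apply: Order.POrderTheory.le_anti; rewrite /leL in h1 h2; rewrite h1 h2. Qed.
Lemma leL_trans : forall a b c : L, leL a b -> leL b c -> leL a c.
Proof. by move=> a b c; exact: Order.POrderTheory.le_trans. Qed.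

Lemma leLt_refl : forall a : Ltilde L, leLt a a.
Proof. by move=> a; rewrite /leLt !Order.POrderTheory.le_refl. Qed.
Lemma leLt_anti : forall a b : Ltilde L, leLt a b -> leLt b a -> a = b.
Proof.
move=> a b /andP[h1 h2] /andP[h3 h4]; apply: val_inj.
case: (val a) (val b) h1 h2 h3 h4 => [a1 a2] [b1 b2] /= h1 h2 h3 h4.
by congr pair; apply: leL_anti.
Qed.
Lemma leLt_trans : forall a b c : Ltilde L, leLt a b -> leLt b c -> leLt a c.
Proof.
move=> a b c /andP[h1 h2] /andP[h3 h4]; apply/andP; split;
  [exact: Order.POrderTheory.le_trans h1 h3 | exact: Order.POrderTheory.le_trans h2 h4].
Qed.

Lemma sum_Lt (F : L * L -> int) (P : pred (L * L)) :
  \sum_(r : Ltilde L | P (val r)) F (val r) =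
  \sum_(x : L * L | ((x.1 `&` x.2 == \bot)%O) && P x) F x.
Proof.
rewrite [RHS](reindex_omap (val : Ltilde L -> L * L) insub); last first.
  by move=> i /andP[iA Pi]; rewrite insubT.
by apply: eq_bigl=> -[i iA]/=; rewrite insubT ?iA /= eqxx andbT.
Qed.

Lemma mob_sum_itv (a b : L) :
  \sum_(c | leL a c && leL c b) mobius (@leL d L) a c = (a == b)%:R.
Proof.
rewrite -(mob_sum leL_refl leL_anti leL_trans) [RHS]big_mkcond [LHS]big_mkcond.
apply: eq_bigr => c _; case: (leL c b); rewrite ?andbT ?andbF //.
by case h: (leL a c) => //; rewrite (mob_nle leL_refl leL_anti leL_trans) ?h.
Qed.

Lemma part1 (p q : Ltilde L) : leLt p q ->
     mobius (@leLt d L) p q =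
     mobius (@leL d L) (val p).1 (val q).1 * mobius (@leL d L) (val p).2 (val q).2.
Proof.
move=> hpq.
rewrite -(mob_unique leLt_refl leLt_anti leLt_trans (m :=
  (fun p q : Ltilde L => mobius (@leL d L) (val p).1 (val q).1 * mobius (@leL d L) (val p).2 (val q).2)) _ hpq) //.
move=> {hpq} a b hab.
rewrite (sum_Lt (fun x => mobius (@leL d L) (val a).1 x.1 * mobius (@leL d L) (val a).2 x.2)
   (fun x => leL (val a).1 x.1 && leL (val a).2 x.2 && (leL x.1 (val b).1 && leL x.2 (val b).2))).
rewrite (eq_bigl (fun x => (leL (val a).1 x.1 && leL x.1 (val b).1) &&
                           (leL (val a).2 x.2 && leL x.2 (val b).2))); last first.
  move=> [x1 x2] /=.
  case h1: (leL (val a).1 x1); case h2: (leL x1 (val b).1);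
  case h3: (leL (val a).2 x2); case h4: (leL x2 (val b).2); rewrite ?andbF ?andbT //=.
  rewrite -Order.BPOrderTheory.lex0 -(eqP (valP b)).
  exact: Order.MeetTheory.leI2.
rewrite -(pair_big (fun x1 => leL (val a).1 x1 && leL x1 (val b).1)
                  (fun x2 => leL (val a).2 x2 && leL x2 (val b).2)
                  (fun x1 x2 => mobius (@leL d L) (val a).1 x1 * mobius (@leL d L) (val a).2 x2)) /=.
rewrite -big_distrlr /= !mob_sum_itv -natrM.
congr (_ %:R).
case: (eqVneq a b) => [->|hne]; first by rewrite !eqxx.
case: (eqVneq (val a).1 (val b).1) => e1 //=; case: (eqVneq (val a).2 (val b).2) => e2 //=.
by case/eqP: hne; apply: val_inj; move: e1 e2; case: (val a) => ? ?; case: (val b) => ? ? /= -> ->.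
Qed.
End Main.

Unset Implicit Arguments. Set Strict Implicit.
Theorem mainTheorem2 (d : Order.disp_t) (L : finBMeetSemilatticeType d) (R : realFieldType) :
  (forall p q : Ltilde L, leLt p q ->
     mobius (@leLt d L) p q =
     mobius (@leL d L) (val p).1 (val q).1 * mobius (@leL d L) (val p).2 (val q).2)
  /\
  (forall f g : Ltilde L -> R,
     (forall p : Ltilde L, f p = \sum_(p' : Ltilde L | leLt p' p) g p') ->
     forall p : Ltilde L,
       g p = \sum_(q : Ltilde L | leLt q p)
               ((mobius (@leL d L) (val q).1 (val p).1)%:~R *
                (mobius (@leL d L) (val q).2 (val p).2)%:~R * f q)).
Proof.
split; first exact: part1.
move=> f g hf p.
rewrite (mob_inv (@leLt_refl d L) (@leLt_anti d L) (@leLt_trans d L) hf p).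
by apply: eq_bigr => q hq; rewrite part1 // intrM.
Qed.
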